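(* Let $d$ be a positive integer, let $0 \le \kappa < d$ be a real number and let $K>0$. Let $N$ be a positive integer and let $S \subseteq [N]^d=\{1,\ldots,N\}^d$ be a set which, for every prime $p$, occupies at most $K p^{\kappa}$ residue classes modulo $p$ (i.e. the image of $S$ in $(\mathbb{Z}/p\mathbb{Z})^d$ has at most $K p^{\kappa}$ elements). Then for every $\varepsilon>0$ there exists a nonzero polynomial $P \in \mathbb{Z}[x_1,\ldots,x_d]$ of complexity at most $C(\log N)^{\frac{\kappa}{d-\kappa}}$ vanishing on at least $(1-\varepsilon)|S|$ points of $S$, where $C$ is a constant depending only on $\kappa, d, \varepsilon$ (and the implied constant $K$), and not on $N$ or $S$.
   Context: A nonzero polynomial in $\mathbb{Z}[x_1,\ldots,x_d]$ is said to have complexity at most $C$ if it has degree at most $C$ and all its coefficients are bounded in absolute value by $N^{C}$. Here $N$ is a parameter tending to infinity; asymptotic statements and constants are uniform in $N$. *)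

(* Defs.v *)
From Stdlib Require Import Reals.
From mathcomp Require Import all_boot all_algebra.
From mathcomp Require Import mpoly.
Set Implicit Arguments. Unset Strict Implicit. Unset Printing Implicit Defensive.
Import GRing.Theory Num.Theory.

Definition point (d : nat) := {ffun 'I_d -> int}.

Definition in_box (d N : nat) (x : point d) : bool :=
  [forall i, (1 <= x i)%R && (x i <= N%:Z)%R].

Definition red_mod (d : nat) (p : nat) (x : point d) : point d :=
  [ffun i => ((x i) %% p%:Z)%Z].

Definition n_classes (d : nat) (p : nat) (S : seq (point d)) : nat :=
  size (undup (map (red_mod p) S)).

Definition eval_pt (d : nat) (P : {mpoly int[d]}) (x : point d) : int :=
  P.@[fun i => x i].

Definition n_zeros (d : nat) (P : {mpoly int[d]}) (S : seq (point d)) : nat :=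
  size [seq x <- S | eval_pt P x == 0%R].

(* P has complexity at most B (w.r.t. parameter N): total degree <= B and all
   coefficients bounded in absolute value by N^B. For nonzero P, msize P = 1 + deg P. *)
Definition complexity_le (d N : nat) (P : {mpoly int[d]}) (B : R) : Prop :=
  Rle (INR (msize P).-1) B /\
  forall m : 'X_{1..d}, Rle (INR `|(P@_m)%R|%N) (Rpower (INR N) B).

(* Main.v *)
Require Import Defs.
From Stdlib Require Import Reals.
From Stdlib Require Import Lra ZArith.
From mathcomp Require Import all_boot all_algebra.
From mathcomp Require Import mpoly.
From mathcomp Require Import all_order zify.
Set Implicit Arguments. Unset Strict Implicit. Unset Printing Implicit Defensive.
Import GRing.Theory Num.Theory.

(* ===== Part A: Chebyshev-type lower bound via central binomial coefficients ===== *)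
Lemma sum_ind_le M r : \sum_(1 <= k < M) (k <= r : nat) <= r.
Proof.
elim: M => [|M IH]; first by rewrite big_geq.
case: M IH => [|M] IH; first by rewrite big_geq.
rewrite big_nat_recr //=.
case: (leqP M.+1 r) => h.
-
  have : \sum_(1 <= k < M.+1) (k <= r : nat) = M.
    rewrite (eq_big_nat _ _ (F2 := fun _ => 1)); last by move=> i /andP[_ hi]; have -> : i <= r by lia.
    by rewrite sum_nat_const_nat; lia.
  lia.
- lia.
Qed.

Lemma div2_le n q : 0 < q -> n.*2 %/ q <= (n %/ q).*2 + 1.
Proof.
move=> q0. rewrite -ltnS ltn_divLR //.
have := ltn_pmod n q0. have := divn_eq n q. nia.
Qed.

Lemma vp_bin_le p n : prime p -> 0 < n -> p ^ logn p 'C(n.*2, n) <= n.*2.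
Proof.
move=> pp n0.
have p1 : 1 < p by apply: prime_gt1.
set r := trunc_log p n.*2.
have hr : p ^ r <= n.*2 by apply: trunc_logP => //; lia.
suff : logn p 'C(n.*2, n) <= r.
  move=> h; apply: leq_trans hr; exact: leq_pexp2l (ltnW p1) h.
have bf := bin_fact (leq_addl n n : n <= n + n).
rewrite addnn in bf.
have e : n.*2 - n = n by lia.
rewrite e in bf.
have L : logn p (n.*2)`! = logn p 'C(n.*2, n) + (logn p n`! + logn p n`!).
  rewrite -bf lognM ?bin_gt0 ?muln_gt0 ?fact_gt0 //; last lia.
  by rewrite lognM ?fact_gt0.
rewrite !logn_fact // in L.
have ext : \sum_(1 <= k < n.+1) n %/ p ^ k = \sum_(1 <= k < n.*2.+1) n %/ p ^ k.
  rewrite [RHS](@big_cat_nat _ _ _ n.+1) //=; last lia.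
  rewrite [X in _ = _ + X]big1_seq ?addn0 // => k /andP[_].
  rewrite mem_index_iota => /andP[hk _].
  apply: divn_small. have := ltn_expl k p1. lia.
rewrite ext in L.
have T : \sum_(1 <= k < n.*2.+1) n.*2 %/ p ^ k <=
         \sum_(1 <= k < n.*2.+1) ((n %/ p ^ k).*2 + (k <= r : nat)).
  apply: leq_sum => k _.
  case: (leqP k r) => hk.
  - by rewrite addn1 /= -addn1; apply: div2_le; rewrite expn_gt0; lia.
  - rewrite divn_small ?addn0 //.
    rewrite ltnNge; apply/negP => hk2. have := trunc_log_max p1 hk2. lia.
rewrite big_split /= in T.
have S2 : \sum_(1 <= k < n.*2.+1) (n %/ p ^ k).*2 = (\sum_(1 <= k < n.*2.+1) n %/ p ^ k).*2.
  by rewrite (big_morph double doubleD (erefl 0 : 0.*2 = 0)).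
have := sum_ind_le n.*2.+1 r.
lia.
Qed.
Lemma bin_le_exp m k : 'C(m, k) <= 2 ^ m.
Proof.
elim: m k => [|m IH] [|k] //=.
- by rewrite bin0 expn_gt0.
- rewrite binS expnS; have := IH k.+1; have := IH k; lia.
Qed.
Lemma bin_ge_exp n : 2 ^ n <= 'C(n.*2, n).
Proof.
elim: n => [|n IH] //.
have e1 := mul_bin_down n.*2.+1 n.
have e2 := mul_bin_diag n.*2.+2 n.
rewrite /= in e1 e2.
have e4 : n.*2.+1 - n = n.+1 by lia.
rewrite e4 in e1.
have e3 : (n.+1) * 'C(n.+1.*2, n.+1) = (n.*2.+1).*2 * 'C(n.*2, n).
  rewrite doubleS.
  apply/eqP; rewrite -(eqn_pmul2l (ltn0Sn n)); apply/eqP. nia.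
rewrite expnS. nia.
Qed.
Lemma exists_j Y : exists j, [/\ 6 <= j, Y < 2^j * 2^j & 2^j * 2^j <= 4 * Y + 4096].
Proof.
elim: Y => [|Y [j [h6 h1 h2]]]; first by exists 6.
case: (ltnP Y.+1 (2^j * 2^j)) => h.
- exists j; split => //; lia.
- exists j.+1; rewrite expnS; split => //; nia.
Qed.

Lemma lin_exp j : 6 <= j -> 8 * j.+1 <= 2 ^ j.
Proof.
elim: j => [|j IH] //= hj.
case: (ltnP j 6) => h.
- have -> : j = 5 by lia. by [].
- rewrite expnS; have := IH h; lia.
Qed.

Lemma prod_decomp m : 0 < m -> m = \prod_(p <- primes m) p ^ logn p m.
Proof. by move=> m0; rewrite {1}(prod_prime_decomp m0) prime_decompE big_map. Qed.

Lemma primes_big Y : exists s : seq nat,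
  [/\ uniq s, all prime s, 2 ^ Y < \prod_(p <- s) p,
      \prod_(p <- s) p <= 2 ^ (16 * (Y + 1024)) &
      all (fun p => p <= 16 * (Y + 1024)) s].
Proof.
have [j [h6 hY ha]] := exists_j Y.
set a := 2 ^ j in hY ha.
have a8 : 8 * j.+1 <= a by apply: lin_exp.
set n := 2 * (a * a).
set m := 'C(n.*2, n).
have m0 : 0 < m by rewrite bin_gt0; lia.
have n0 : 0 < n by lia.
have Hv : forall p, p \in primes m -> p ^ logn p m <= n.*2.
  move=> p; rewrite mem_primes => /and3P[pp _ _]; exact: vp_bin_le.
have Hp : forall p, p \in primes m -> p <= n.*2.
  move=> p hp; apply: leq_trans (Hv p hp).
  rewrite -{1}(expn1 p); apply: leq_pexp2l.
    by move: hp; rewrite mem_primes => /and3P[/prime_gt0 -> _ _].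
  by rewrite logn_gt0.
exists (primes m); split.
- exact: primes_uniq.
- exact: all_prime_primes.
-
  set P := \prod_(p <- primes m) p.
  set g := fun p => if p * p <= n.*2 then n.*2 else 1.
  have H1 : m <= P * \prod_(p <- primes m) g p.
    rewrite {1}(prod_decomp m0) /P -big_split /= big_seq [X in _ <= X]big_seq.
    apply: leq_prod => p hp. rewrite /g.
    have p0 : 0 < p by move: hp; rewrite mem_primes => /and3P[/prime_gt0 -> _ _].
    case: ifP => hpp.
    + apply: leq_trans (Hv p hp) _; rewrite leq_pmull //.
    + rewrite muln1. case: (leqP (logn p m) 1) => hl.
      * apply: leq_trans (leq_pexp2l p0 hl) _; by rewrite expn1.
      * exfalso; move/negbT: hpp; rewrite -ltnNge => hpp.
        have : p ^ 2 <= p ^ logn p m by apply: leq_pexp2l.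
        have := Hv p hp. rewrite expnS expn1. lia.
  set c := count (fun p => p * p <= n.*2) (primes m).
  have Hg : \prod_(p <- primes m) g p = (n.*2) ^ c.
    rewrite /g /c; elim: (primes m) => [|q r IH]; first by rewrite big_nil.
    rewrite big_cons IH /=; case: ifP => _; by rewrite ?expnS ?mul1n.
  have Hc : c <= (2 * a).+1.
    rewrite /c -size_filter.
    have -> : (2 * a).+1 = size (iota 0 (2 * a).+1) by rewrite size_iota.
    apply: uniq_leq_size; first by apply: filter_uniq; exact: primes_uniq.
    move=> p; rewrite mem_filter mem_iota => /andP[hpp _].
    rewrite add0n ltnS. rewrite /n in hpp. nia.
  have H2 : 2 ^ n <= P * 2 ^ ((2 * j + 2) * (2 * a).+1).
    apply: leq_trans (bin_ge_exp n) _. apply: leq_trans H1 _.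
    rewrite Hg leq_mul2l; apply/orP; right.
    have -> : n.*2 = 2 ^ (2 * j + 2).
      rewrite /n /a -muln2 expnD mul2n -addnn expnD. have -> : (j + 0)%coq_nat = j by lia. rewrite (_ : 2 ^ 2 = 4) //. nia.
    rewrite -expnM; apply: leq_pexp2l => //. nia.
  rewrite ltnNge; apply/negP => HP.
  have : P * 2 ^ ((2 * j + 2) * (2 * a).+1) <= 2 ^ (Y + (2 * j + 2) * (2 * a).+1).
    by rewrite expnD leq_mul2r HP orbT.
  have : 2 ^ (Y + (2 * j + 2) * (2 * a).+1) < 2 ^ n.
    rewrite ltn_exp2l //. rewrite /n. nia.
  lia.
-
  apply: leq_trans (_ : m <= _).
    rewrite {2}(prod_decomp m0) big_seq [X in _ <= X]big_seq.
    apply: leq_prod => p hp.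
    have p0 : 0 < p by move: hp; rewrite mem_primes => /and3P[/prime_gt0 -> _ _].
    rewrite -{1}(expn1 p); apply: leq_pexp2l => //. by rewrite logn_gt0.
  apply: leq_trans (bin_le_exp _ _) _. rewrite leq_exp2l //. rewrite /n. lia.
- apply/allP => p hp; apply: leq_trans (Hp p hp) _. rewrite /n. lia.
Qed.

(* ===== Part B/C: pigeonhole construction of the polynomial ===== *)
Section RingPart.
Import Order.TTheory.
Fixpoint enc (l : seq (nat * nat)) : nat :=
  if l is q :: r then q.1 + q.2 * enc r else 0.

Lemma enc_lt l : all (fun q => q.1 < q.2) l -> enc l < \prod_(q <- l) q.2.
Proof.
elim: l => [|[v b] r IH] /=; first by rewrite big_nil.
move=> /andP[hv hr]; rewrite big_cons /=.
have := IH hr. nia.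
Qed.

Lemma enc_inj l1 l2 : map snd l1 = map snd l2 ->
  all (fun q => q.1 < q.2) l1 -> all (fun q => q.1 < q.2) l2 ->
  enc l1 = enc l2 -> l1 = l2.
Proof.
elim: l1 l2 => [|[v1 b1] r1 IH] [|[v2 b2] r2] //= [eb er] /andP[h1 a1] /andP[h2 a2] /=.
subst b2 => e.
have ev : v1 = v2.
  have := congr1 (modn^~ b1) e. rewrite !(mulnC b1) (addnC v1) (addnC v2) !modnMDl !modn_small //.
have ee : enc r1 = enc r2.
  have := congr1 (divn^~ b1) e. rewrite !(mulnC b1) (addnC v1) (addnC v2) !divnMDl ?divn_small ?addn0 //; lia.
by rewrite ev (IH r2 er a1 a2 ee).
Qed.

Lemma flatten_map_inj (T : eqType) (U : Type) (F G : T -> seq U) (s : seq T) :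
  (forall x, size (F x) = size (G x)) ->
  flatten (map F s) = flatten (map G s) -> forall x, x \in s -> F x = G x.
Proof.
move=> hs; elim: s => [|y s IH] //= e x; rewrite inE => /orP [/eqP ->|hx].
- have := congr1 (take (size (F y))) e. by rewrite !take_size_cat ?hs.
- apply: IH hx. have := congr1 (drop (size (F y))) e. by rewrite !drop_size_cat ?hs.
Qed.

Lemma prod_primes_dvd (s : seq nat) (z : nat) : uniq s -> all prime s ->
  all (fun p => p %| z) s -> \prod_(p <- s) p %| z.
Proof.
elim: s => [|p s IH] /=; first by rewrite big_nil dvd1n.
move=> /andP[ps us] /andP[pp aps] /andP[dz dzs].
rewrite big_cons Gauss_dvd ?dz ?IH //.
rewrite prime_coprime // Euclid_dvd_prod //.
apply/negP; elim: s ps aps {IH us dzs} => [|q s IH] //==> /=; first by rewrite big_nil. rewrite big_cons.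
rewrite inE negb_or => /andP[pq ps] /andP[qp aps] /orP[|].
- by rewrite dvdn_prime2 // (negbTE pq).
- exact: IH.
Qed.
Local Open Scope ring_scope.

Section PolDef.
Variables (d t : nat).
Local Notation F := {ffun 'I_d -> 'I_t}.

Definition mon (e : F) : 'X_{1..d} := [multinom (e i : nat) | i < d].
Definition Pol (c : F -> int) : {mpoly int[d]} := \sum_(e : F) c e *: 'X_[mon e].
Definition mono (x : point d) (m : 'X_{1..d}) : int := \prod_(i < d) x i ^+ m i.
Definition V (c : F -> int) (x : point d) : int := \sum_(e : F) c e * mono x (mon e).

Lemma mon_inj : injective mon.
Proof.
move=> e1 e2 /mnmP h; apply/ffunP => i; apply/val_inj.
by have := h i; rewrite !mnmE.
Qed.

Lemma Pol_coef c m : (Pol c)@_m = \sum_(e : F) c e * (mon e == m)%:R.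
Proof.
rewrite /Pol raddf_sum; apply: eq_bigr => e _.
by rewrite /= mcoeffZ mcoeffX.
Qed.

Lemma Pol_coef_mon c e : (Pol c)@_(mon e) = c e.
Proof.
rewrite Pol_coef (bigD1 e) //= eqxx mulr1 big1 ?addr0 // => e' ne.
by rewrite (inj_eq mon_inj) (negbTE ne) mulr0.
Qed.

Lemma Pol_coef_cases c m : (exists e, m = mon e) \/ (Pol c)@_m = 0.
Proof.
case: (pickP (fun e => mon e == m)) => [e /eqP <-|h]; first by left; exists e.
right; rewrite Pol_coef big1 // => e _; by rewrite h mulr0.
Qed.

Lemma Pol_coef_bound c (B : int) : 0 <= B -> (forall e, `|c e| <= B) ->
  forall m, `|(Pol c)@_m| <= B.
Proof.
move=> B0 hB m; case: (Pol_coef_cases c m) => [[e ->]|->].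
- by rewrite Pol_coef_mon.
- by rewrite normr0.
Qed.

Lemma Pol_msize c : (msize (Pol c) <= (t.-1 * d).+1)%N.
Proof.
rewrite msizeE; apply/bigmax_leqP_seq => m hm _.
rewrite ltnS.
case: (Pol_coef_cases c m) => [[e ->]|h]; last first.
  by move: hm; rewrite mcoeff_msupp h eqxx.
rewrite mdegE.
apply: leq_trans (_ : (\sum_(i < d) t.-1 <= _)%N).
  apply: leq_sum => i _; rewrite mnmE. have := ltn_ord (e i). lia.
by rewrite sum_nat_const card_ord mulnC.
Qed.

Lemma Pol_eval c x : eval_pt (Pol c) x = V c x.
Proof.
rewrite /eval_pt /Pol /V raddf_sum; apply: eq_bigr => e _.
by rewrite /= mevalZ mevalX.
Qed.

Lemma Pol_neq0 c e : c e != 0 -> Pol c != 0.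
Proof.
move=> h; apply/negP => /eqP h0.
by move: h; rewrite -(Pol_coef_mon c e) h0 mcoeff0 eqxx.
Qed.

End PolDef.

Definition congz (p a b : int) : Prop := (a %% p)%Z = (b %% p)%Z.

Lemma congzD p a b c e : congz p a b -> congz p c e -> congz p (a + c) (b + e).
Proof. by rewrite /congz => h1 h2; rewrite -modzDm h1 h2 modzDm. Qed.

Lemma congzM p a b c e : congz p a b -> congz p c e -> congz p (a * c) (b * e).
Proof. by rewrite /congz => h1 h2; rewrite -modzMm h1 h2 modzMm. Qed.

Lemma congzX p a b k : congz p a b -> congz p (a ^+ k) (b ^+ k).
Proof. by rewrite /congz => h1; rewrite -modzXm h1 modzXm. Qed.

Lemma V_red d t (c : {ffun 'I_d -> 'I_t} -> int) x (p : nat) :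
  congz p (V c x) (V c (red_mod p x)).
Proof.
rewrite /V. apply: (big_ind2 (congz p)) => //; first exact: congzD.
move=> e _; apply: congzM => //.
rewrite /mono; apply: (big_ind2 (congz p)) => //; first exact: congzM.
move=> i _; apply: congzX. by rewrite /congz ffunE modz_mod.
Qed.

Lemma PoszX' (N k : nat) : (N ^ k)%N%:Z = (N%:Z) ^+ k.
Proof. by rewrite -!natz natrX. Qed.

Lemma pow_le (N k t : nat) : (0 < N)%N -> (k <= t)%N -> (N%:Z) ^+ k <= (N%:Z) ^+ t.
Proof. move=> N0 kt; rewrite -!PoszX' lez_nat; exact: leq_pexp2l. Qed.

Lemma mono_bound d t N (x : point d) (e : {ffun 'I_d -> 'I_t}) :
  (0 < N)%N -> in_box N x -> `|mono x (mon e)| <= (N%:Z) ^+ (t * d).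
Proof.
move=> N0 /forallP hx.
rewrite /mono normr_prod.
have -> : (N%:Z) ^+ (t * d) = \prod_(i < d) (N%:Z) ^+ t.
  by rewrite prodr_const card_ord exprM.
apply: ler_prod => i _; rewrite normr_ge0 /=.
have /andP[h1 h2] := hx i.
rewrite normrX mnmE ger0_norm; last by apply: le_trans h1.
apply: le_trans (pow_le N0 (ltnW (ltn_ord (e i)))).
apply: lerXn2r => //; rewrite ?nnegrE //; apply: le_trans h1 => //.
Qed.

Lemma V_bound d t N (B : nat) (c : {ffun 'I_d -> 'I_t} -> int) (x : point d) :
  (0 < N)%N -> in_box N x -> (forall e, `|c e| <= B%:Z) ->
  `|V c x| <= (t ^ d * B * N ^ (t * d))%N%:Z.
Proof.
move=> N0 hx hc.
apply: le_trans (ler_norm_sum _ _ _) _.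
apply: le_trans (_ : \sum_(e : {ffun 'I_d -> 'I_t}) (B%:Z * (N%:Z) ^+ (t * d)) <= _).
  apply: ler_sum => e _; rewrite normrM; apply: ler_pM => //.
  exact: mono_bound.
rewrite sumr_const card_ffun !card_ord -mulr_natl.
by rewrite -PoszX' -!PoszM natz -PoszM mulnA.
Qed.

Lemma prod_const_seq (T : Type) (l : seq T) (p : nat) : (\prod_(u <- l) p = p ^ size l)%N.
Proof. elim: l => [|u l IH]; by rewrite ?big_nil ?big_cons ?IH ?expnS. Qed.

Lemma W_bound d (S : seq (point d)) (s : seq nat) (A : nat) :
  all prime s -> (forall p, p \in s -> (n_classes p S <= A)%N) ->
  (\prod_(b <- flatten [seq [seq p | u <- undup (map (red_mod p) S)] | p <- s]) b
     <= (\prod_(p <- s) p) ^ A)%N.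
Proof.
elim: s => [|p s IH] /=; first by rewrite !big_nil exp1n.
move=> /andP[pp ps] hA.
rewrite big_cat big_cons expnMn /= big_map prod_const_seq.
apply: leq_mul.
- apply: leq_pexp2l; first exact: prime_gt0.
  by have := hA p (mem_head _ _).
- apply: IH => // q hq; apply: hA; by rewrite inE hq orbT.
Qed.

Definition vm (p : nat) (z : int) : nat := `|(z %% p%:Z)%Z|%N.

Lemma vm_lt p z : (0 < p)%N -> (vm p z < p)%N.
Proof.
move=> p0; rewrite /vm -ltz_nat.
have nz : p%:Z != 0 by rewrite eqz_nat -lt0n.
rewrite gez0_abs ?modz_ge0 // ltz_pmod //.
Qed.

Lemma vm_congz p z1 z2 : (0 < p)%N -> vm p z1 = vm p z2 -> congz p z1 z2.
Proof.
move=> p0 e; rewrite /congz.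
have nz : p%:Z != 0 by rewrite eqz_nat -lt0n.
rewrite -(gez0_abs (modz_ge0 z1 nz)) -(gez0_abs (modz_ge0 z2 nz)).
by rewrite /vm in e; rewrite e.
Qed.

Lemma main_comb d N t h A (S : seq (point d)) (s : seq nat) :
  (0 < N)%N -> uniq s -> all prime s -> all (in_box N) S ->
  (forall p, p \in s -> (n_classes p S <= A)%N) ->
  (t ^ d * 2 ^ h * N ^ (t * d) < \prod_(p <- s) p)%N ->
  ((\prod_(p <- s) p) ^ A < 2 ^ (h * t ^ d))%N ->
  exists P : {mpoly int[d]}, [/\ P != 0, (msize P <= (t.-1 * d).+1)%N,
     (forall m, `|P@_m| <= (2 ^ h)%N%:Z) & all (fun x => eval_pt P x == 0) S].
Proof.
move=> N0 us ps hS hA hval hpig.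
pose F := {ffun 'I_d -> 'I_t}.
pose H := (2 ^ h)%N.
pose U p := undup (map (red_mod p) S).
pose toZ (c : {ffun F -> 'I_H}) : F -> int := fun e => (c e : nat)%:Z.
pose L c := flatten [seq [seq (vm p (V (toZ c) u), p) | u <- U p] | p <- s].
pose Bl := flatten [seq [seq p | u <- U p] | p <- s].
have LB : forall c, map snd (L c) = Bl.
  move=> c; rewrite /L /Bl map_flatten -map_comp; congr flatten.
  apply: eq_map => p /=; rewrite -map_comp; by apply: eq_map.
have Llt : forall c, all (fun q => q.1 < q.2)%N (L c).
  move=> c; apply/allP => q /flattenP [l /mapP [p hp ->] /mapP [u _ ->]] /=.
  apply: vm_lt; apply: prime_gt0; exact: (allP ps).
pose W := (\prod_(b <- Bl) b)%N.
have encb : forall c, (enc (L c) < W)%N.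
  move=> c; have := enc_lt (Llt c). by rewrite /W -(LB c) big_map.
pose Phi c : 'I_W := Ordinal (encb c).
have ninj : ~~ injectiveb Phi.
  apply/negP => /injectiveP inj.
  have := leq_card _ inj. rewrite !card_ffun !card_ord -expnM mulnC.
  have hW := W_bound ps hA.
  move=> h1; have := leq_trans h1 hW. rewrite mulnC => h2; have := leq_ltn_trans h2 hpig; by rewrite ltnn.
have [c1 [c2 ne12 eP]] := injectivePn _ ninj.
have eL : L c1 = L c2.
  apply: enc_inj; rewrite ?LB //. by have := congr1 val eP.
have cong : forall p, p \in s -> forall x, x \in S ->
    congz p (V (toZ c1) x) (V (toZ c2) x).
  move=> p hp x hx.
  have p0 : (0 < p)%N by apply: prime_gt0; exact: (allP ps).
  have hu : red_mod p x \in U p by rewrite mem_undup map_f.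
  have e2 : [seq (vm p (V (toZ c1) u), p) | u <- U p] = [seq (vm p (V (toZ c2) u), p) | u <- U p].
    apply: (flatten_map_inj (s:=s) (F := fun p => [seq (vm p (V (toZ c1) u), p) | u <- U p])
     (G := fun p => [seq (vm p (V (toZ c2) u), p) | u <- U p])) => //.
    by move=> q; rewrite !size_map.
  move/eq_in_map: e2 => e3.
  have [hv] := e3 _ hu.
  rewrite /congz (V_red (toZ c1) x p) (vm_congz p0 hv) -(V_red (toZ c2) x p) //.
have [e0 he0] : exists e, c1 e != c2 e.
  case: (pickP (fun e => c1 e != c2 e)) => [e he|hh]; first by exists e.
  have e12 : c1 = c2 by apply/ffunP => e; apply/eqP; move: (hh e) => /negbFE.
  by rewrite e12 eqxx in ne12.
pose c := fun e => toZ c1 e - toZ c2 e.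
have cb : forall e, `|c e| <= (2 ^ h)%N%:Z.
  move=> e; rewrite /c /toZ ler_norml.
  have := ltn_ord (c1 e); have := ltn_ord (c2 e); rewrite /H => a1 a2.
  move: a1 a2. set M := (2 ^ h)%N. set u := nat_of_ord (c1 e). set v := nat_of_ord (c2 e). lia.
have Vc : forall x, V c x = V (toZ c1) x - V (toZ c2) x.
  move=> x; rewrite /V -sumrB; apply: eq_bigr => e _; by rewrite /c mulrBl.
exists (Pol c); split.
- apply: (Pol_neq0 (e := e0)); rewrite /c /toZ subr_eq0 eqz_nat.
  apply: contra he0 => /eqP h1; apply/eqP; exact: val_inj.
- exact: Pol_msize.
- apply: Pol_coef_bound => //.
- apply/allP => x hx; rewrite Pol_eval Vc subr_eq0.
  set z := V (toZ c1) x - V (toZ c2) x.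
  have hz : (\prod_(p <- s) p %| `|z|%N)%N.
    apply: prod_primes_dvd => //; apply/allP => p hp.
    have := cong p hp x hx; rewrite /congz => hc.
    have : (p%:Z %| z)%Z by rewrite -eqz_mod_dvd; apply/eqP.
    by rewrite dvdzE.
  have bz : (`|z|%N <= t ^ d * 2 ^ h * N ^ (t * d))%N.
    rewrite -lez_nat abszE /z -Vc. apply: V_bound => //; exact: (allP hS).
  rewrite -subr_eq0 -/z -absz_eq0; apply/eqP.
  case: (posnP `|z|%N) => // zpos.
  have := dvdn_leq zpos hz. lia.
Qed.
End RingPart.

Section RealPart.
Local Open Scope R_scope.

Lemma Rpower_pos x y : 0 < Rpower x y.
Proof. unfold Rpower; apply exp_pos. Qed.

Lemma Rpower_ge1 x y : 1 <= x -> 0 <= y -> 1 <= Rpower x y.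
Proof.
intros hx hy. rewrite -(@Rpower_O x) ; last lra. apply Rle_Rpower; lra.
Qed.

Definition c3 (d kappa K c2 : R) := (K + 1) * Rpower c2 (1 + kappa) / d + 1.

Lemma key_ineq (d kappa K c2 t l D0 A : R) :
  0 < d -> 0 <= kappa -> kappa < d -> 0 < K -> 0 < c2 -> 1 <= t -> 1 <= l ->
  1 <= D0 -> D0 <= c2 * t * l -> A <= K * Rpower D0 kappa + 1 ->
  Rpower (c3 d kappa K c2 * Rpower l kappa) (/ (d - kappa)) < t ->
  D0 * A < d * t * l * Rpower t d.
Proof.
intros d0 k0 kd K0 c20 t1 l1 D1 Dle Ale Xlt.
set (dk := d - kappa).
assert (dk0 : 0 < dk) by (unfold dk; lra).
set (c := c3 d kappa K c2).
assert (c0 : 0 < c).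
{ unfold c, c3. assert (0 < Rpower c2 (1 + kappa)) by apply Rpower_pos.
  assert (0 <= (K + 1) * Rpower c2 (1 + kappa) / d).
  { apply Rmult_le_pos; [|left; apply Rinv_0_lt_compat; lra]. nra. }
  lra. }
assert (Lk0 : 0 < Rpower l kappa) by apply Rpower_pos.
assert (H1 : c * Rpower l kappa < Rpower t dk).
{ replace (c * Rpower l kappa) with (Rpower (Rpower (c * Rpower l kappa) (/ dk)) dk).
  - apply Rlt_Rpower_l; [lra|]. split; [apply Rpower_pos|exact Xlt].
  - rewrite Rpower_mult. replace (/ dk * dk) with 1 by (field; lra).
    apply Rpower_1. nra. }
assert (Dk1 : 1 <= Rpower D0 kappa) by (apply Rpower_ge1; lra).
assert (HA : D0 * A <= (K + 1) * Rpower D0 (1 + kappa)).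
{ rewrite Rpower_plus Rpower_1; last lra.
  assert (A <= (K + 1) * Rpower D0 kappa) by nra. nra. }
assert (HD : Rpower D0 (1 + kappa) <= Rpower c2 (1 + kappa) * Rpower t (1 + kappa) * Rpower l (1 + kappa)).
{ rewrite Rpower_mult_distr; try lra. rewrite Rpower_mult_distr; try nra.
  apply Rle_Rpower_l; lra. }
assert (Ht : Rpower t d = Rpower t (1 + kappa) * Rpower t dk / t).
{ rewrite <- Rpower_plus. replace (1 + kappa + dk) with (1 + d) by (unfold dk; lra).
  rewrite Rpower_plus Rpower_1; last lra. field. lra. }
assert (Hl : Rpower l (1 + kappa) = l * Rpower l kappa).
{ rewrite Rpower_plus Rpower_1; last lra. reflexivity. }
rewrite Ht. rewrite Hl in HD.
set (T1 := Rpower t (1 + kappa)) in *.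
set (Td := Rpower t dk) in *.
set (P2 := Rpower c2 (1 + kappa)) in *.
set (Lk := Rpower l kappa) in *.
assert (T10 : 0 < T1) by apply Rpower_pos.
assert (P20 : 0 < P2) by apply Rpower_pos.
assert (e : d * t * l * (T1 * Td / t) = d * l * T1 * Td) by (field; lra).
rewrite e.
assert (Hc : (K + 1) * P2 <= d * c - d).
{ unfold c, c3. fold P2. replace (d * ((K + 1) * P2 / d + 1) - d) with ((K+1) * P2) by (field; lra). lra. }
assert (S1 : d * l * T1 * (c * Lk) < d * l * T1 * Td).
{ apply Rmult_lt_compat_l; [|exact H1]. repeat apply Rmult_lt_0_compat; lra. }
assert (S2 : (K + 1) * (P2 * T1 * (l * Lk)) <= d * l * T1 * (c * Lk) - d * l * T1 * Lk).
{ assert (0 <= l * T1 * Lk) by (left; repeat apply Rmult_lt_0_compat; lra).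
  replace ((K + 1) * (P2 * T1 * (l * Lk))) with (((K+1)*P2) * (l*T1*Lk)) by ring.
  replace (d * l * T1 * (c * Lk) - d * l * T1 * Lk) with ((d*c - d) * (l*T1*Lk)) by ring.
  apply Rmult_le_compat_r; lra. }
assert (0 < d * l * T1 * Lk) by (repeat apply Rmult_lt_0_compat; lra).
assert (HD2 : (K + 1) * Rpower D0 (1 + kappa) <= (K + 1) * (P2 * T1 * (l * Lk))) by (apply Rmult_le_compat_l; lra).
lra.
Qed.

Lemma ln2_pos : 0 < ln 2.
Proof. rewrite <- ln_1. apply ln_increasing; lra. Qed.

Lemma ln_le2 x : 2 <= x -> ln 2 <= ln x.
Proof. intros h. destruct (Req_dec x 2) as [->|]; [lra|]. left; apply ln_increasing; lra. Qed.

Definition C0 (d kappa K c2 : R) :=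
  Rpower (c3 d kappa K c2) (/ (d - kappa)) * Rpower (2 / ln 2) (kappa / (d - kappa))
  + Rpower (/ ln 2) (kappa / (d - kappa)).

Lemma deg_ineq (d kappa K c2 N l t : R) :
  0 < d -> 0 <= kappa -> kappa < d -> 0 < K -> 0 < c2 ->
  2 <= N -> 1 <= l -> l <= 2 * ln N / ln 2 ->
  t <= Rpower (c3 d kappa K c2 * Rpower l kappa) (/ (d - kappa)) + 1 ->
  t <= C0 d kappa K c2 * Rpower (ln N) (kappa / (d - kappa)).
Proof.
intros d0 k0 kd K0 c20 N2 l1 lle tle.
assert (dk0 : 0 < d - kappa) by lra.
assert (a0 : 0 <= kappa / (d - kappa)).
{ unfold Rdiv; apply Rmult_le_pos; [lra|left; apply Rinv_0_lt_compat; lra]. }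
set (a := kappa / (d - kappa)) in *.
assert (c0 : 0 < c3 d kappa K c2).
{ unfold c3. assert (0 < Rpower c2 (1 + kappa)) by apply Rpower_pos.
  assert (0 <= (K + 1) * Rpower c2 (1 + kappa) / d).
  { apply Rmult_le_pos; [|left; apply Rinv_0_lt_compat; lra]. nra. }
  lra. }
assert (L2 := ln2_pos).
assert (LN : ln 2 <= ln N) by (apply ln_le2; lra).
assert (LN0 : 0 < ln N) by lra.
assert (HX : Rpower (c3 d kappa K c2 * Rpower l kappa) (/ (d - kappa))
             = Rpower (c3 d kappa K c2) (/ (d - kappa)) * Rpower l a).
{ rewrite -Rpower_mult_distr; try (apply Rpower_pos); try lra.
  rewrite Rpower_mult. unfold a. f_equal. }
assert (Hl : Rpower l a <= Rpower (2 / ln 2) a * Rpower (ln N) a).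
{ rewrite Rpower_mult_distr.
  - apply Rle_Rpower_l; [lra|]. split; [lra|].
    replace (2 / ln 2 * ln N) with (2 * ln N / ln 2) by (field; lra). lra.
  - unfold Rdiv; apply Rmult_lt_0_compat; [lra|apply Rinv_0_lt_compat; lra].
  - lra. }
assert (H1 : 1 <= Rpower (/ ln 2) a * Rpower (ln N) a).
{ rewrite Rpower_mult_distr.
  - apply Rpower_ge1; [|lra].
    replace (/ ln 2 * ln N) with (ln N / ln 2) by (field; lra).
    apply (Rmult_le_reg_r (ln 2)); [lra|]. unfold Rdiv. rewrite Rmult_assoc Rinv_l; lra.
  - apply Rinv_0_lt_compat; lra.
  - lra. }
unfold C0. fold a.
assert (0 < Rpower (c3 d kappa K c2) (/ (d - kappa))) by apply Rpower_pos.
assert (HH : Rpower (c3 d kappa K c2) (/ (d - kappa)) * Rpower l a <=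
        Rpower (c3 d kappa K c2) (/ (d - kappa)) * (Rpower (2 / ln 2) a * Rpower (ln N) a))
  by (apply Rmult_le_compat_l; lra).
lra.
Qed.

Lemma INR_muln m n : INR (m * n)%N = INR m * INR n.
Proof. by rewrite -multE mult_INR. Qed.

Lemma INR_expn m n : INR (m ^ n)%N = INR m ^ n.
Proof. elim: n => [|n IH] //=. by rewrite expnS INR_muln IH. Qed.

Lemma INR_up r : 0 < r -> (0 < Z.to_nat (up r))%N /\ r < INR (Z.to_nat (up r)) /\ INR (Z.to_nat (up r)) <= r + 1.
Proof.
move=> r0; have [h1 h2] := archimed r.
have hz : Z.le 0 (up r) by apply: le_IZR; lra.
have e : INR (Z.to_nat (up r)) = IZR (up r) by rewrite INR_IZR_INZ Z2Nat.id.
rewrite e; split; last lra.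
have : (0 < INR (Z.to_nat (up r))) by rewrite e; lra.
move=> h; apply/ltP; apply: INR_lt; by rewrite /=.
Qed.

Lemma ln_le x y : 0 < x -> x <= y -> ln x <= ln y.
Proof. move=> x0 xy; case: (Req_dec x y) => [->|ne]; first lra. left; apply: ln_increasing; lra. Qed.

Lemma params (d : nat) (kappa K : R) : (0 < d)%N -> 0 <= kappa -> kappa < INR d -> 0 < K ->
  exists C : R, forall N : nat, (2 <= N)%N ->
  exists t l A : nat, [/\ [&& (0 < t)%N, (N < 2 ^ l)%N & (2 ^ l <= N * N)%N],
    (forall p : nat, (0 < p)%N -> (p <= 16 * (t * d + d * t * l + l * (t * d) + 1024))%N ->
        K * Rpower (INR p) kappa < INR A),
    (16 * (t * d + d * t * l + l * (t * d) + 1024) * A < (d * t * l) * t ^ d)%N &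
    INR (2 * d * t) <= C * Rpower (ln (INR N)) (kappa / (INR d - kappa))].
Proof.
move=> d0 k0 kd K0.
have dR : 0 < INR d by apply: lt_0_INR; apply/ltP.
set c2 := INR (48 * d + 16 * 1024).
have c20 : 0 < c2 by apply: lt_0_INR; apply/ltP; lia.
exists (2 * INR d * C0 (INR d) kappa K c2) => N hN.
set l := (trunc_log 2 N).+1.
have hNl : (N < 2 ^ l)%N by apply: trunc_log_ltn.
have hlN : (2 ^ (l.-1) <= N)%N by apply: trunc_logP; lia.
have hl2 : (2 ^ l <= N * N)%N by move: hlN; rewrite /l expnS /=; nia.
have l1 : 1 <= INR l by apply: (le_INR 1); apply/leP; rewrite /l.
have NR : 2 <= INR N by apply: (le_INR 2); apply/leP.
have lle : INR l <= 2 * ln (INR N) / ln 2.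
  have L2 := ln2_pos.
  have : INR (2 ^ l.-1) <= INR N by apply: le_INR; apply/leP.
  rewrite INR_expn => h.
  have h2 := ln_le (pow_lt 2 l.-1 ltac:(lra)) h.
  rewrite ln_pow in h2; last lra.
  have e : INR l = INR l.-1 + 1 by rewrite /l -S_INR.
  have LN := @ln_le 2 (INR N) ltac:(lra) NR.
  apply: (Rmult_le_reg_r (ln 2)); first lra.
  rewrite /Rdiv Rmult_assoc Rinv_l; last lra. rewrite e Rmult_1_r Rmult_plus_distr_r Rmult_1_l; lra.
set X := Rpower (c3 (INR d) kappa K c2 * Rpower (INR l) kappa) (/ (INR d - kappa)).
have X0 : 0 < X by apply: Rpower_pos.
have [t0 [tX tX1]] := INR_up X0.
set t := Z.to_nat (up X) in t0 tX tX1.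
have t1 : 1 <= INR t by apply: (le_INR 1); apply/leP.
set Y := (t * d + d * t * l + l * (t * d))%N.
set D0 := (16 * (Y + 1024))%N.
set rA := K * Rpower (INR D0) kappa.
have rA0 : 0 < rA by apply: Rmult_lt_0_compat => //; apply: Rpower_pos.
have [_ [AX AX1]] := INR_up rA0.
set A := Z.to_nat (up rA) in AX AX1.
have D01 : 1 <= INR D0 by apply: (le_INR 1); apply/leP; rewrite /D0; lia.
exists t, l, A; split => //.
- by rewrite t0 hNl hl2.
- move=> p p0 hp. apply: Rle_lt_trans AX. rewrite /rA.
  apply: Rmult_le_compat_l; first lra.
  apply: Rle_Rpower_l => //; split.
    * apply: lt_0_INR; by apply/ltP.
    * apply: le_INR; by apply/leP.
- apply/ltP; apply: INR_lt.
  have HD : INR D0 <= c2 * INR t * INR l.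
    rewrite /c2 -!INR_muln; apply: le_INR; apply/leP. rewrite /D0 /Y. nia.
  have HA : INR A <= K * Rpower (INR D0) kappa + 1 by rewrite /rA in AX1.
  have KI := @key_ineq (INR d) kappa K c2 (INR t) (INR l) (INR D0) (INR A) dR k0 kd K0 c20 t1 l1 D01 HD HA tX.
  have e1 : INR (D0 * A)%N = INR D0 * INR A := INR_muln D0 A.
  have e2 : INR (d * t * l * t ^ d)%N = INR d * INR t * INR l * Rpower (INR t) (INR d).
    rewrite !INR_muln INR_expn Rpower_pow //; lra.
  by rewrite e1 e2.
- rewrite !INR_muln.
  have h := deg_ineq dR k0 kd K0 c20 NR l1 lle tX1.
  have e : INR 2 = 2 by [].
  rewrite e. set CC := C0 _ _ _ _. set LL := Rpower _ _.
  have : 0 <= INR d by lra.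
  move=> hd; rewrite (Rmult_assoc (2 * INR d) CC LL); apply: Rmult_le_compat_l; [lra | exact: h].
Qed.

End RealPart.

Lemma leq_expr m n e : (m <= n)%N -> (m ^ e <= n ^ e)%N.
Proof. case: e => [|e] h //; by rewrite leq_exp2r. Qed.

Theorem theorem1p2 (d : nat) (kappa K eps : R) :
  (0 < d)%N -> Rle 0 kappa -> Rlt kappa (INR d) -> Rlt 0 K -> Rlt 0 eps ->
  exists C : R,
    forall (N : nat) (S : seq (point d)),
      (2 <= N)%N ->
      uniq S ->
      all (in_box N) S ->
      (forall p : nat, prime p -> Rle (INR (n_classes p S)) (Rmult K (Rpower (INR p) kappa))) ->
      exists P : {mpoly int[d]},
        P != 0%R /\
        complexity_le N P (Rmult C (Rpower (ln (INR N)) (Rdiv kappa (Rminus (INR d) kappa)))) /\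
        Rle (Rmult (Rminus 1 eps) (INR (size S))) (INR (n_zeros P S)).
Proof.
move=> d0 k0 kd K0 e0.
have [C HC] := params d0 k0 kd K0.
exists C => N S hN uS hbox hcl.
have [t [l [A [/and3P[t0 hNl hl2] hA hpig hdeg]]]] := HC N hN.
set Y := (t * d + d * t * l + l * (t * d))%N.
have [s [us ps hlow hup hle]] := primes_big Y.
have N0 : (0 < N)%N by lia.
have hA' : forall p, p \in s -> (n_classes p S <= A)%N.
  move=> p hp. have pp := allP ps p hp. have p0 := prime_gt0 pp.
  have hp2 := allP hle p hp.
  have h1 := hcl p pp.
  have h2 := hA p p0 hp2.
  have h3 := Rle_lt_trans _ _ _ h1 h2.
  apply: ltnW; apply/ltP; exact: INR_lt.
have hval : (t ^ d * 2 ^ (d * t * l) * N ^ (t * d) < \prod_(p <- s) p)%N.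
  apply: leq_ltn_trans hlow.
  have e1 : (t ^ d <= 2 ^ (t * d))%N.
    rewrite expnM; apply: leq_expr; exact: ltnW (ltn_expl t (isT : 1 < 2)%N).
  have e2 : (N ^ (t * d) <= 2 ^ (l * (t * d)))%N.
    rewrite [X in _ <= X]expnM; apply: leq_expr; exact: ltnW.
  rewrite /Y !expnD. apply: leq_mul; first apply: leq_mul => //. done.
have hpig' : ((\prod_(p <- s) p) ^ A < 2 ^ ((d * t * l) * t ^ d))%N.
  apply: leq_ltn_trans (leq_expr A hup) _.
  rewrite -expnM ltn_exp2l //.
have [P [Pn0 Pms Pco Pz]] := main_comb N0 us ps hbox hA' hval hpig'.
exists P; split => //; split; first split.
- apply: Rle_trans hdeg. apply: le_INR; apply/leP.
  move: Pms. nia.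
- move=> m.
  have h1 : (`|mcoeff m P|%N <= 2 ^ (d * t * l))%N by rewrite -lez_nat abszE; exact: Pco.
  have h2 : (2 ^ (d * t * l) <= N ^ (2 * d * t))%N.
    rewrite [X in (X <= _)%N](_ : _ = (2 ^ l) ^ (d * t)); last by rewrite -expnM mulnC.
    rewrite [X in (_ <= X)%N](_ : _ = (N * N) ^ (d * t)); last by rewrite expnMn -expnD; congr (N ^ _); lia.
    exact: leq_expr.
  apply: Rle_trans (_ : Rle (INR (N ^ (2 * d * t))) _).
    apply: le_INR; apply/leP; exact: leq_trans h1 h2.
  rewrite INR_expn -Rpower_pow; last by apply: lt_0_INR; apply/ltP.
  apply: Rle_Rpower => //. apply: (le_INR 1); apply/leP; lia.
- rewrite /n_zeros (all_filterP Pz).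
  have := pos_INR (size S). move=> h.
  rewrite /Rminus Rmult_plus_distr_r Rmult_1_l.
  have : Rle 0 (Rmult eps (INR (size S))) by apply: Rmult_le_pos => //; apply: Rlt_le.
  rewrite -Ropp_mult_distr_l. lra.
Qed.
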